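(* Let $T=\left[\begin{smallmatrix} R & M\\ N & S\end{smallmatrix}\right]$ and $T'=\left[\begin{smallmatrix} R' & M'\\ N' & S'\end{smallmatrix}\right]$ be Morita context rings with $R,S,R',S'$ indecomposable. Then $\mathrm{Iso}_g(T,T')\subseteq\mathrm{Iso}_0(T,T')$.
   Context: All rings have an identity $1\neq 0$; a ring is indecomposable if its only central idempotents are $0$ and $1$. A Morita context $(R,S,M,N,f,g)$: rings $R,S$, an $R$-$S$-bimodule $M$, an $S$-$R$-bimodule $N$, bimodule morphisms $f:M\otimes_SN\to R$, $g:N\otimes_RM\to S$, with $[m,n]=f(m\otimes n)$, $(n,m)=g(n\otimes m)$ satisfying $[m,n]m'=m(n,m')$ and $n[m,n']=(n,m)n'$. Its Morita context ring $T$ consists of formal matrices $\left[\begin{smallmatrix} r & m\\ n & s\end{smallmatrix}\right]$ with entrywise addition and product $\left[\begin{smallmatrix} r & m\\ n & s\end{smallmatrix}\right]\left[\begin{smallmatrix} r' & m'\\ n' & s'\end{smallmatrix}\right]=\left[\begin{smallmatrix} rr'+[m,n'] & rm'+ms'\\ nr'+sn' & (n,m')+ss'\end{smallmatrix}\right]$; similarly for $T'$. Grading: $T_{-1}=\left[\begin{smallmatrix} 0 & 0\\ N & 0\end{smallmatrix}\right]$, $T_0=\left[\begin{smallmatrix} R & 0\\ 0 & S\end{smallmatrix}\right]$, $T_1=\left[\begin{smallmatrix} 0 & M\\ 0 & 0\end{smallmatrix}\right]$, $T_i=0$ otherwise. $\mathrm{Iso}_g(T,T')$ is the set of ring isomorphisms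 $\phi:T\to T'$ that are graded ($\phi(T_i)\subseteq T'_i$ for all $i$) or anti-graded ($\phi(T_i)\subseteq T'_{-i}$ for all $i$). $\mathrm{Iso}_0(T,T')=\mathrm{Iso}_0^0(T,T')\cup\mathrm{Iso}_0^1(T,T')$, where $\mathrm{Iso}_0^0(T,T')$ is the set of maps $\phi\left(\left[\begin{smallmatrix} r & m\\ n & s\end{smallmatrix}\right]\right)=\left[\begin{smallmatrix}\gamma(r) & \gamma(r)m'_0-m'_0\delta(s)+u(m)\\ n'_0\gamma(r)-\delta(s)n'_0+v(n) & \delta(s)\end{smallmatrix}\right]$ with $\gamma:R\to R'$, $\delta:S\to S'$ ring isomorphisms, $u:M\to M'$, $v:N\to N'$ additive bijections with $u(rms)=\gamma(r)u(m)\delta(s)$, $v(snr)=\delta(s)v(n)\gamma(r)$, and $m'_0\in M'$, $n'_0\in N'$ with $[m'_0,N']=0$, $(N',m'_0)=0$, $[M',n'_0]=0$, $(n'_0,M')=0$, $[u(m),v(n)]=\gamma([m,n])$, $(v(n),u(m))=\delta((n,m))$; and $\mathrm{Iso}_0^1(T,T')$ is the set of maps $\psi\left(\left[\begin{smallmatrix} r & m\\ n & s\end{smallmatrix}\right]\right)=\left[\begin{smallmatrix}\sigma(s) & m'_*\rho(r)-\sigma(s)m'_*+\nu(n)\\ \rho(r)n'_*-n'_*\sigma(s)+\mu(m) & \rho(r)\end{smallmatrix}\right]$ with $\rho:R\to S'$, $\sigma:S\to R'$ ring isomorphisms, $\mu:M\to N'$, $\nu:N\to M'$ additive bijections with $\mu(rms)=\rho(r)\mu(m)\sigma(s)$,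 $\nu(snr)=\sigma(s)\nu(n)\rho(r)$, and $m'_*\in M'$, $n'_*\in N'$ with $[m'_*,N']=0$, $(N',m'_* )=0$, $[M',n'_*]=0$, $(n'_*,M')=0$, $(\mu(m),\nu(n))=\rho([m,n])$, $[\nu(n),\mu(m)]=\sigma((n,m))$. *)

(* Defs.v *)
From HB Require Import structures.
From mathcomp Require Import all_boot all_order all_algebra.
Set Implicit Arguments. Unset Strict Implicit. Unset Printing Implicit Defensive.
Import GRing.Theory.
Local Open Scope ring_scope.

(* Rings have 1 <> 0 (nzRingType).
   lM / rM : left R- and right S-actions on M;  lN / rN : left S- and right
   R-actions on N.  f m n = [m,n] (an R-R bimodule map M (x)_S N -> R, given
   as an S-balanced biadditive map), g n m = (n,m) (an S-S bimodule map
   N (x)_R M -> S, given as an R-balanced biadditive map). *)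
Record morita_context := MoritaContext {
  mc_R : nzRingType; mc_S : nzRingType; mc_M : zmodType; mc_N : zmodType;
  mc_lM : mc_R -> mc_M -> mc_M; mc_rM : mc_M -> mc_S -> mc_M;
  mc_lN : mc_S -> mc_N -> mc_N; mc_rN : mc_N -> mc_R -> mc_N;
  mc_f : mc_M -> mc_N -> mc_R; mc_g : mc_N -> mc_M -> mc_S;
  mc_lMDr : forall r m1 m2, mc_lM r (m1 + m2) = mc_lM r m1 + mc_lM r m2;
  mc_lMDl : forall r1 r2 m, mc_lM (r1 + r2) m = mc_lM r1 m + mc_lM r2 m;
  mc_lMA : forall r1 r2 m, mc_lM (r1 * r2) m = mc_lM r1 (mc_lM r2 m);
  mc_lM1 : forall m, mc_lM 1 m = m;
  mc_rMDl : forall m1 m2 s, mc_rM (m1 + m2) s = mc_rM m1 s + mc_rM m2 s;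
  mc_rMDr : forall m s1 s2, mc_rM m (s1 + s2) = mc_rM m s1 + mc_rM m s2;
  mc_rMA : forall m s1 s2, mc_rM m (s1 * s2) = mc_rM (mc_rM m s1) s2;
  mc_rM1 : forall m, mc_rM m 1 = m;
  mc_MA : forall r m s, mc_rM (mc_lM r m) s = mc_lM r (mc_rM m s);
  mc_lNDr : forall s n1 n2, mc_lN s (n1 + n2) = mc_lN s n1 + mc_lN s n2;
  mc_lNDl : forall s1 s2 n, mc_lN (s1 + s2) n = mc_lN s1 n + mc_lN s2 n;
  mc_lNA : forall s1 s2 n, mc_lN (s1 * s2) n = mc_lN s1 (mc_lN s2 n);
  mc_lN1 : forall n, mc_lN 1 n = n;
  mc_rNDl : forall n1 n2 r, mc_rN (n1 + n2) r = mc_rN n1 r + mc_rN n2 r;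
  mc_rNDr : forall n r1 r2, mc_rN n (r1 + r2) = mc_rN n r1 + mc_rN n r2;
  mc_rNA : forall n r1 r2, mc_rN n (r1 * r2) = mc_rN (mc_rN n r1) r2;
  mc_rN1 : forall n, mc_rN n 1 = n;
  mc_NA : forall s n r, mc_rN (mc_lN s n) r = mc_lN s (mc_rN n r);
  mc_fDl : forall m1 m2 n, mc_f (m1 + m2) n = mc_f m1 n + mc_f m2 n;
  mc_fDr : forall m n1 n2, mc_f m (n1 + n2) = mc_f m n1 + mc_f m n2;
  mc_f_bal : forall m s n, mc_f (mc_rM m s) n = mc_f m (mc_lN s n);
  mc_f_l : forall r m n, mc_f (mc_lM r m) n = r * mc_f m n;
  mc_f_r : forall m n r, mc_f m (mc_rN n r) = mc_f m n * r;
  mc_gDl : forall n1 n2 m, mc_g (n1 + n2) m = mc_g n1 m + mc_g n2 m;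
  mc_gDr : forall n m1 m2, mc_g n (m1 + m2) = mc_g n m1 + mc_g n m2;
  mc_g_bal : forall n r m, mc_g (mc_rN n r) m = mc_g n (mc_lM r m);
  mc_g_l : forall s n m, mc_g (mc_lN s n) m = s * mc_g n m;
  mc_g_r : forall n m s, mc_g n (mc_rM m s) = mc_g n m * s;
  mc_assoc1 : forall m n m', mc_lM (mc_f m n) m' = mc_rM m (mc_g n m');
  mc_assoc2 : forall n m n', mc_rN n (mc_f m n') = mc_lN (mc_g n m) n'
}.

(* Elements of the Morita context ring T: formal matrices [r m; n s]. *)
Record mcT (C : morita_context) := MCT {
  t_r : mc_R C; t_m : mc_M C; t_n : mc_N C; t_s : mc_S C }.

Definition mcT_zero (C : morita_context) : mcT C := @MCT C 0 0 0 0.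
Definition mcT_one (C : morita_context) : mcT C := @MCT C 1 0 0 1.
Definition mcT_add (C : morita_context) (x y : mcT C) : mcT C :=
  @MCT C (t_r x + t_r y) (t_m x + t_m y) (t_n x + t_n y) (t_s x + t_s y).
Definition mcT_mul (C : morita_context) (x y : mcT C) : mcT C :=
  @MCT C (t_r x * t_r y + mc_f (t_m x) (t_n y))
        (mc_lM (t_r x) (t_m y) + mc_rM (t_m x) (t_s y))
        (mc_rN (t_n x) (t_r y) + mc_lN (t_s x) (t_n y))
        (mc_g (t_n x) (t_m y) + t_s x * t_s y).

Definition mcT_ring_iso (C C' : morita_context) (phi : mcT C -> mcT C') : Prop :=
  bijective phi /\
  (forall x y, phi (mcT_add x y) = mcT_add (phi x) (phi y)) /\
  (forall x y, phi (mcT_mul x y) = mcT_mul (phi x) (phi y)) /\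
  phi (mcT_one C) = mcT_one C'.

Definition ring_iso (A B : nzRingType) (h : A -> B) : Prop :=
  bijective h /\ {morph h : x y / x + y} /\ {morph h : x y / x * y} /\ h 1 = 1.

Definition add_bij (A B : zmodType) (h : A -> B) : Prop :=
  bijective h /\ {morph h : x y / x + y}.

Definition indecomposable (A : nzRingType) : Prop :=
  forall e : A, e * e = e -> (forall x : A, e * x = x * e) -> e = 0 \/ e = 1.

Definition mc_grade (C : morita_context) (i : int) (x : mcT C) : Prop :=
  if i == 0 then t_m x = 0 /\ t_n x = 0
  else if i == 1 then t_r x = 0 /\ t_n x = 0 /\ t_s x = 0
  else if i == -1 then t_r x = 0 /\ t_m x = 0 /\ t_s x = 0
  else x = mcT_zero C.

Definition graded_map (C C' : morita_context) (phi : mcT C -> mcT C') : Prop :=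
  forall (i : int) (x : mcT C), mc_grade i x -> mc_grade i (phi x).

Definition antigraded_map (C C' : morita_context) (phi : mcT C -> mcT C') : Prop :=
  forall (i : int) (x : mcT C), mc_grade i x -> mc_grade (- i) (phi x).

Definition Iso_g (C C' : morita_context) (phi : mcT C -> mcT C') : Prop :=
  mcT_ring_iso phi /\ (graded_map phi \/ antigraded_map phi).

Definition Iso_00 (C C' : morita_context) (phi : mcT C -> mcT C') : Prop :=
  exists (gam : mc_R C -> mc_R C') (del : mc_S C -> mc_S C')
         (u : mc_M C -> mc_M C') (v : mc_N C -> mc_N C')
         (m0 : mc_M C') (n0 : mc_N C'),
  ring_iso gam /\ ring_iso del /\ add_bij u /\ add_bij v /\
      (forall r m s, u (mc_rM (mc_lM r m) s) = mc_rM (mc_lM (gam r) (u m)) (del s)) /\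
      (forall s n r, v (mc_rN (mc_lN s n) r) = mc_rN (mc_lN (del s) (v n)) (gam r)) /\
      (forall n' : mc_N C', mc_f m0 n' = 0) /\ (forall n' : mc_N C', mc_g n' m0 = 0) /\
      (forall m' : mc_M C', mc_f m' n0 = 0) /\ (forall m' : mc_M C', mc_g n0 m' = 0) /\
      (forall m n, mc_f (u m) (v n) = gam (mc_f m n)) /\
      (forall m n, mc_g (v n) (u m) = del (mc_g n m)) /\
      (forall x : mcT C, phi x =
         @MCT C' (gam (t_r x))
                (mc_lM (gam (t_r x)) m0 - mc_rM m0 (del (t_s x)) + u (t_m x))
                (mc_rN n0 (gam (t_r x)) - mc_lN (del (t_s x)) n0 + v (t_n x))
                (del (t_s x))).

Definition Iso_01 (C C' : morita_context) (phi : mcT C -> mcT C') : Prop :=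
  exists (rho : mc_R C -> mc_S C') (sig : mc_S C -> mc_R C')
         (mu : mc_M C -> mc_N C') (nu : mc_N C -> mc_M C')
         (ms : mc_M C') (ns : mc_N C'),
  ring_iso rho /\ ring_iso sig /\ add_bij mu /\ add_bij nu /\
      (forall r m s, mu (mc_rM (mc_lM r m) s) = mc_rN (mc_lN (rho r) (mu m)) (sig s)) /\
      (forall s n r, nu (mc_rN (mc_lN s n) r) = mc_rM (mc_lM (sig s) (nu n)) (rho r)) /\
      (forall n' : mc_N C', mc_f ms n' = 0) /\ (forall n' : mc_N C', mc_g n' ms = 0) /\
      (forall m' : mc_M C', mc_f m' ns = 0) /\ (forall m' : mc_M C', mc_g ns m' = 0) /\
      (forall m n, mc_g (mu m) (nu n) = rho (mc_f m n)) /\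
      (forall m n, mc_f (nu n) (mu m) = sig (mc_g n m)) /\
      (forall x : mcT C, phi x =
         @MCT C' (sig (t_s x))
                (mc_rM ms (rho (t_r x)) - mc_lM (sig (t_s x)) ms + nu (t_n x))
                (mc_lN (rho (t_r x)) ns - mc_rN ns (sig (t_s x)) + mu (t_m x))
                (rho (t_r x))).

Definition Iso_0 (C C' : morita_context) (phi : mcT C -> mcT C') : Prop :=
  Iso_00 phi \/ Iso_01 phi.

(* Main.v *)
Require Import Defs.
From mathcomp Require Import all_boot all_order all_algebra.
Set Implicit Arguments. Unset Strict Implicit. Unset Printing Implicit Defensive.
Import GRing.Theory.
Local Open Scope ring_scope.

Lemma dbl0 (V : zmodType) (x : V) : x = x + x -> x = 0.
Proof. by move=> H; apply: (@addrI _ x); rewrite addr0 -H. Qed.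

Lemma f0l C n : mc_f (0 : mc_M C) n = 0.
Proof. by apply: dbl0; rewrite -mc_fDl addr0. Qed.
Lemma f0r C m : mc_f m (0 : mc_N C) = 0.
Proof. by apply: dbl0; rewrite -mc_fDr addr0. Qed.
Lemma g0l C m : mc_g (0 : mc_N C) m = 0.
Proof. by apply: dbl0; rewrite -mc_gDl addr0. Qed.
Lemma g0r C n : mc_g n (0 : mc_M C) = 0.
Proof. by apply: dbl0; rewrite -mc_gDr addr0. Qed.
Lemma lM0l C m : mc_lM (0 : mc_R C) m = 0.
Proof. by apply: dbl0; rewrite -mc_lMDl addr0. Qed.
Lemma lM0r C (r : mc_R C) : mc_lM r 0 = 0.
Proof. by apply: dbl0; rewrite -mc_lMDr addr0. Qed.
Lemma rM0l C (s : mc_S C) : mc_rM 0 s = 0.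
Proof. by apply: dbl0; rewrite -mc_rMDl addr0. Qed.
Lemma rM0r C m : mc_rM m (0 : mc_S C) = 0.
Proof. by apply: dbl0; rewrite -mc_rMDr addr0. Qed.
Lemma lN0l C n : mc_lN (0 : mc_S C) n = 0.
Proof. by apply: dbl0; rewrite -mc_lNDl addr0. Qed.
Lemma lN0r C (s : mc_S C) : mc_lN s 0 = 0.
Proof. by apply: dbl0; rewrite -mc_lNDr addr0. Qed.
Lemma rN0l C (r : mc_R C) : mc_rN 0 r = 0.
Proof. by apply: dbl0; rewrite -mc_rNDl addr0. Qed.
Lemma rN0r C n : mc_rN n (0 : mc_R C) = 0.
Proof. by apply: dbl0; rewrite -mc_rNDr addr0. Qed.

Ltac msimp := rewrite /mcT_mul /mcT_add /=;
  do 3 rewrite ?f0l ?f0r ?g0l ?g0r ?lM0l ?lM0r ?rM0l ?rM0r ?lN0l ?lN0r ?rN0l ?rN0r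
   ?mc_lM1 ?mc_rM1 ?mc_lN1 ?mc_rN1 ?mulr0 ?mul0r ?mulr1 ?mul1r ?addr0 ?add0r.

Section Cor.
Definition E1 C : mcT C := MCT 1 0 0 0.
Definition E2 C : mcT C := MCT 0 0 0 1.
End Cor.

Lemma cor11 C (Y : mcT C) : mcT_mul (mcT_mul (E1 C) Y) (E1 C) = MCT (t_r Y) 0 0 0.
Proof. by case: Y => r m n s; rewrite /E1; msimp. Qed.
Lemma cor12 C (Y : mcT C) : mcT_mul (mcT_mul (E1 C) Y) (E2 C) = MCT 0 (t_m Y) 0 0.
Proof. by case: Y => r m n s; rewrite /E1 /E2; msimp. Qed.
Lemma cor21 C (Y : mcT C) : mcT_mul (mcT_mul (E2 C) Y) (E1 C) = MCT 0 0 (t_n Y) 0.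
Proof. by case: Y => r m n s; rewrite /E1 /E2; msimp. Qed.
Lemma cor22 C (Y : mcT C) : mcT_mul (mcT_mul (E2 C) Y) (E2 C) = MCT 0 0 0 (t_s Y).
Proof. by case: Y => r m n s; rewrite /E1 /E2; msimp. Qed.

Lemma phi0 C C' (phi : mcT C -> mcT C') : mcT_ring_iso phi -> phi (mcT_zero C) = mcT_zero C'.
Proof.
case=> _ [addP _]; have := addP (mcT_zero C) (mcT_zero C).
have -> : mcT_add (mcT_zero C) (mcT_zero C) = mcT_zero C by rewrite /mcT_add /mcT_zero /= !addr0.
case: (phi _) => a b c d; rewrite /mcT_add /= => E; case: E => /dbl0 -> /dbl0 -> /dbl0 -> /dbl0 -> //.
Qed.

Lemma phiE2 C C' (phi : mcT C -> mcT C') : mcT_ring_iso phi ->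
  phi (E1 C) = E1 C' -> phi (E2 C) = E2 C'.
Proof.
case=> _ [addP [_ oneP]] H1; have := addP (E1 C) (E2 C).
have -> : mcT_add (E1 C) (E2 C) = mcT_one C by rewrite /mcT_add /E1 /E2 /= !addr0 !add0r.
rewrite oneP H1 /mcT_one /E1 /E2; case: (phi _) => a b c d; rewrite /mcT_add /= !add0r.
move=> E; case: E => Ea <- <- <-; congr MCT; apply: (@addrI _ 1); by rewrite addr0 -Ea.
Qed.

Lemma phiE2' C C' (phi : mcT C -> mcT C') : mcT_ring_iso phi ->
  phi (E1 C) = E2 C' -> phi (E2 C) = E1 C'.
Proof.
case=> _ [addP [_ oneP]] H1; have := addP (E1 C) (E2 C).
have -> : mcT_add (E1 C) (E2 C) = mcT_one C by rewrite /mcT_add /E1 /E2 /= !addr0 !add0r.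
rewrite oneP H1 /mcT_one /E1 /E2; case: (phi _) => a b c d; rewrite /mcT_add /= !add0r.
move=> E; case: E => <- <- <- Ed; congr MCT; apply: (@addrI _ 1); by rewrite addr0 -Ed.
Qed.

Lemma case1 C C' (phi : mcT C -> mcT C') : mcT_ring_iso phi ->
  phi (E1 C) = E1 C' -> Iso_00 phi.
Proof.
move=> iso H1; have H2 := phiE2 iso H1; have Z := phi0 iso.
case: iso => [[g phiK gK] [addP [mulP oneP]]].
pose gam r := t_r (phi (@MCT C r 0 0 0)).
pose del s := t_s (phi (@MCT C 0 0 0 s)).
pose u m := t_m (phi (@MCT C 0 m 0 0)).
pose v n := t_n (phi (@MCT C 0 0 n 0)).
have pR r : phi (MCT r 0 0 0) = MCT (gam r) 0 0 0.
  transitivity (phi (mcT_mul (mcT_mul (E1 C) (MCT r 0 0 0)) (E1 C))); first by rewrite cor11.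
  by rewrite !mulP H1 cor11.
have pM m : phi (MCT 0 m 0 0) = MCT 0 (u m) 0 0.
  transitivity (phi (mcT_mul (mcT_mul (E1 C) (MCT 0 m 0 0)) (E2 C))); first by rewrite cor12.
  by rewrite !mulP H1 H2 cor12.
have pN n : phi (MCT 0 0 n 0) = MCT 0 0 (v n) 0.
  transitivity (phi (mcT_mul (mcT_mul (E2 C) (MCT 0 0 n 0)) (E1 C))); first by rewrite cor21.
  by rewrite !mulP H1 H2 cor21.
have pS s : phi (MCT 0 0 0 s) = MCT 0 0 0 (del s).
  transitivity (phi (mcT_mul (mcT_mul (E2 C) (MCT 0 0 0 s)) (E2 C))); first by rewrite cor22.
  by rewrite !mulP H2 cor22.
have pX x : phi x = MCT (gam (t_r x)) (u (t_m x)) (v (t_n x)) (del (t_s x)).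
  case: x => r m n s /=.
  have -> : MCT r m n s = mcT_add (mcT_add (mcT_add (MCT r 0 0 0) (MCT 0 m 0 0))
     (MCT 0 0 n 0)) (MCT 0 0 0 s) by rewrite /mcT_add /= !addr0 !add0r.
  by rewrite !addP pR pM pN pS /mcT_add /= !addr0 !add0r.
exists gam, del, u, v, 0, 0.
split.
  split; first exists (fun r' => t_r (g (MCT r' 0 0 0))).
  - by move=> r; rewrite -pR phiK.
  - move=> r'; have := pX (g (MCT r' 0 0 0)); rewrite gK => E; case: E => E _ _ _.
    exact: esym.
  split.
    move=> r1 r2; rewrite /gam.
    have -> : @MCT C (r1 + r2) 0 0 0 = mcT_add (MCT r1 0 0 0) (MCT r2 0 0 0) by msimp.
    by rewrite addP.
  split.
    move=> r1 r2; rewrite /gam.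
    have -> : @MCT C (r1 * r2) 0 0 0 = mcT_mul (MCT r1 0 0 0) (MCT r2 0 0 0) by msimp.
    by rewrite mulP -/(gam r1) -/(gam r2) !pR; msimp.
  by rewrite /gam -/(E1 C) H1.
split.
  split; first exists (fun s' => t_s (g (MCT 0 0 0 s'))).
  - by move=> s; rewrite -pS phiK.
  - move=> s'; have := pX (g (MCT 0 0 0 s')); rewrite gK => E; case: E => _ _ _ E.
    exact: esym.
  split.
    move=> r1 r2; rewrite /del.
    have -> : @MCT C 0 0 0 (r1 + r2) = mcT_add (MCT 0 0 0 r1) (MCT 0 0 0 r2) by msimp.
    by rewrite addP.
  split.
    move=> r1 r2; rewrite /del.
    have -> : @MCT C 0 0 0 (r1 * r2) = mcT_mul (MCT 0 0 0 r1) (MCT 0 0 0 r2) by msimp.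
    by rewrite mulP -/(del r1) -/(del r2) !pS; msimp.
  by rewrite /del -/(E2 C) H2.
split.
  split; first exists (fun s' => t_m (g (MCT 0 s' 0 0))).
  - by move=> s; rewrite -pM phiK.
  - move=> s'; have := pX (g (MCT 0 s' 0 0)); rewrite gK => E; case: E => _ E _ _.
    exact: esym.
  move=> r1 r2; rewrite /u.
  have -> : @MCT C 0 (r1 + r2) 0 0 = mcT_add (MCT 0 r1 0 0) (MCT 0 r2 0 0) by msimp.
  by rewrite addP.
split.
  split; first exists (fun s' => t_n (g (MCT 0 0 s' 0))).
  - by move=> s; rewrite -pN phiK.
  - move=> s'; have := pX (g (MCT 0 0 s' 0)); rewrite gK => E; case: E => _ _ E _.
    exact: esym.
  move=> r1 r2; rewrite /v.
  have -> : @MCT C 0 0 (r1 + r2) 0 = mcT_add (MCT 0 0 r1 0) (MCT 0 0 r2 0) by msimp.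
  by rewrite addP.
split.
  move=> r m s; rewrite /u.
  have -> : @MCT C 0 (mc_rM (mc_lM r m) s) 0 0 =
    mcT_mul (mcT_mul (MCT r 0 0 0) (MCT 0 m 0 0)) (MCT 0 0 0 s) by msimp.
  by rewrite !mulP -/(u m) pR pM pS; msimp.
split.
  move=> s n r; rewrite /v.
  have -> : @MCT C 0 0 (mc_rN (mc_lN s n) r) 0 =
    mcT_mul (mcT_mul (MCT 0 0 0 s) (MCT 0 0 n 0)) (MCT r 0 0 0) by msimp.
  by rewrite !mulP -/(v n) pR pN pS; msimp.
do 4 (split; first by move=> ?; rewrite ?f0l ?f0r ?g0l ?g0r).
split.
  move=> m n; rewrite /gam.
  have -> : @MCT C (mc_f m n) 0 0 0 = mcT_mul (MCT 0 m 0 0) (MCT 0 0 n 0) by msimp.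
  by rewrite mulP -/(u m) -/(v n) pM pN; msimp.
split.
  move=> m n; rewrite /del.
  have -> : @MCT C 0 0 0 (mc_g n m) = mcT_mul (MCT 0 0 n 0) (MCT 0 m 0 0) by msimp.
  by rewrite mulP -/(u m) -/(v n) pM pN; msimp.
move=> x; rewrite pX; msimp.
by rewrite !oppr0 !add0r.
Qed.

Lemma case2 C C' (phi : mcT C -> mcT C') : mcT_ring_iso phi ->
  phi (E1 C) = E2 C' -> Iso_01 phi.
Proof.
move=> iso H1; have H2 := phiE2' iso H1; have Z := phi0 iso.
case: iso => [[g phiK gK] [addP [mulP oneP]]].
pose rho r := t_s (phi (@MCT C r 0 0 0)).
pose sig s := t_r (phi (@MCT C 0 0 0 s)).
pose mu m := t_n (phi (@MCT C 0 m 0 0)).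
pose nu n := t_m (phi (@MCT C 0 0 n 0)).
have pR r : phi (MCT r 0 0 0) = MCT 0 0 0 (rho r).
  transitivity (phi (mcT_mul (mcT_mul (E1 C) (MCT r 0 0 0)) (E1 C))); first by rewrite cor11.
  by rewrite !mulP H1 cor22.
have pM m : phi (MCT 0 m 0 0) = MCT 0 0 (mu m) 0.
  transitivity (phi (mcT_mul (mcT_mul (E1 C) (MCT 0 m 0 0)) (E2 C))); first by rewrite cor12.
  by rewrite !mulP H1 H2 cor21.
have pN n : phi (MCT 0 0 n 0) = MCT 0 (nu n) 0 0.
  transitivity (phi (mcT_mul (mcT_mul (E2 C) (MCT 0 0 n 0)) (E1 C))); first by rewrite cor21.
  by rewrite !mulP H1 H2 cor12.
have pS s : phi (MCT 0 0 0 s) = MCT (sig s) 0 0 0.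
  transitivity (phi (mcT_mul (mcT_mul (E2 C) (MCT 0 0 0 s)) (E2 C))); first by rewrite cor22.
  by rewrite !mulP H2 cor11.
have pX x : phi x = MCT (sig (t_s x)) (nu (t_n x)) (mu (t_m x)) (rho (t_r x)).
  case: x => r m n s /=.
  have -> : MCT r m n s = mcT_add (mcT_add (mcT_add (MCT r 0 0 0) (MCT 0 m 0 0))
     (MCT 0 0 n 0)) (MCT 0 0 0 s) by rewrite /mcT_add /= !addr0 !add0r.
  by rewrite !addP pR pM pN pS /mcT_add /= !addr0 !add0r.
exists rho, sig, mu, nu, 0, 0.
split.
  split; first exists (fun r' => t_r (g (MCT 0 0 0 r'))).
  - by move=> r; rewrite -pR phiK.
  - move=> r'; have := pX (g (MCT 0 0 0 r')); rewrite gK => E; case: E => _ _ _ E.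
    exact: esym.
  split.
    move=> r1 r2; rewrite /rho.
    have -> : @MCT C (r1 + r2) 0 0 0 = mcT_add (MCT r1 0 0 0) (MCT r2 0 0 0) by msimp.
    by rewrite addP.
  split.
    move=> r1 r2; rewrite /rho.
    have -> : @MCT C (r1 * r2) 0 0 0 = mcT_mul (MCT r1 0 0 0) (MCT r2 0 0 0) by msimp.
    by rewrite mulP -/(rho r1) -/(rho r2) !pR; msimp.
  by rewrite /rho -/(E1 C) H1.
split.
  split; first exists (fun s' => t_s (g (MCT s' 0 0 0))).
  - by move=> s; rewrite -pS phiK.
  - move=> s'; have := pX (g (MCT s' 0 0 0)); rewrite gK => E; case: E => E _ _ _.
    exact: esym.
  split.
    move=> r1 r2; rewrite /sig.
    have -> : @MCT C 0 0 0 (r1 + r2) = mcT_add (MCT 0 0 0 r1) (MCT 0 0 0 r2) by msimp.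
    by rewrite addP.
  split.
    move=> r1 r2; rewrite /sig.
    have -> : @MCT C 0 0 0 (r1 * r2) = mcT_mul (MCT 0 0 0 r1) (MCT 0 0 0 r2) by msimp.
    by rewrite mulP -/(sig r1) -/(sig r2) !pS; msimp.
  by rewrite /sig -/(E2 C) H2.
split.
  split; first exists (fun s' => t_m (g (MCT 0 0 s' 0))).
  - by move=> s; rewrite -pM phiK.
  - move=> s'; have := pX (g (MCT 0 0 s' 0)); rewrite gK => E; case: E => _ _ E _.
    exact: esym.
  move=> r1 r2; rewrite /mu.
  have -> : @MCT C 0 (r1 + r2) 0 0 = mcT_add (MCT 0 r1 0 0) (MCT 0 r2 0 0) by msimp.
  by rewrite addP.
split.
  split; first exists (fun s' => t_n (g (MCT 0 s' 0 0))).
  - by move=> s; rewrite -pN phiK.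
  - move=> s'; have := pX (g (MCT 0 s' 0 0)); rewrite gK => E; case: E => _ E _ _.
    exact: esym.
  move=> r1 r2; rewrite /nu.
  have -> : @MCT C 0 0 (r1 + r2) 0 = mcT_add (MCT 0 0 r1 0) (MCT 0 0 r2 0) by msimp.
  by rewrite addP.
split.
  move=> r m s; rewrite /mu.
  have -> : @MCT C 0 (mc_rM (mc_lM r m) s) 0 0 =
    mcT_mul (mcT_mul (MCT r 0 0 0) (MCT 0 m 0 0)) (MCT 0 0 0 s) by msimp.
  by rewrite !mulP -/(mu m) pR pM pS; msimp.
split.
  move=> s n r; rewrite /nu.
  have -> : @MCT C 0 0 (mc_rN (mc_lN s n) r) 0 =
    mcT_mul (mcT_mul (MCT 0 0 0 s) (MCT 0 0 n 0)) (MCT r 0 0 0) by msimp.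
  by rewrite !mulP -/(nu n) pR pN pS; msimp.
do 4 (split; first by move=> ?; rewrite ?f0l ?f0r ?g0l ?g0r).
split.
  move=> m n; rewrite /rho.
  have -> : @MCT C (mc_f m n) 0 0 0 = mcT_mul (MCT 0 m 0 0) (MCT 0 0 n 0) by msimp.
  by rewrite mulP -/(mu m) -/(nu n) pM pN; msimp.
split.
  move=> m n; rewrite /sig.
  have -> : @MCT C 0 0 0 (mc_g n m) = mcT_mul (MCT 0 0 n 0) (MCT 0 m 0 0) by msimp.
  by rewrite mulP -/(mu m) -/(nu n) pM pN; msimp.
move=> x; rewrite pX; msimp.
by rewrite !oppr0 !add0r.
Qed.

Theorem corollary3p8 (C C' : morita_context) :
  indecomposable (mc_R C) -> indecomposable (mc_S C) ->
  indecomposable (mc_R C') -> indecomposable (mc_S C') ->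
  forall phi : mcT C -> mcT C', Iso_g phi -> Iso_0 phi.
Proof.
move=> _ _ indR indS phi [iso gr].
have Z := phi0 iso.
have [G0 [G1 G2]] : (forall x, t_m x = 0 -> t_n x = 0 -> t_m (phi x) = 0 /\ t_n (phi x) = 0)
  /\ (forall m, t_r (phi (MCT 0 m 0 0)) = 0 /\ t_s (phi (MCT 0 m 0 0)) = 0)
  /\ (forall n, t_r (phi (MCT 0 0 n 0)) = 0 /\ t_s (phi (MCT 0 0 n 0)) = 0).
  case: gr => H; (split; [move=> x hm hn | split => [m|n]]).
  - by have := H 0 x; rewrite /mc_grade /=; apply.
  - by have := H 1 (MCT 0 m 0 0); rewrite /mc_grade /= => /(_ (conj erefl (conj erefl erefl))) [-> [_ ->]].
  - by have := H (-1) (MCT 0 0 n 0); rewrite /mc_grade /= => /(_ (conj erefl (conj erefl erefl))) [-> [_ ->]].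
  - by have := H 0 x; rewrite /mc_grade /=; apply.
  - by have := H 1 (MCT 0 m 0 0); rewrite /mc_grade /= => /(_ (conj erefl (conj erefl erefl))) [-> [_ ->]].
  - by have := H (-1) (MCT 0 0 n 0); rewrite /mc_grade /= => /(_ (conj erefl (conj erefl erefl))) [-> [_ ->]].
case: (iso) => [[g phiK gK] [addP [mulP oneP]]].
have dec y : phi y = mcT_add (mcT_add (phi (MCT (t_r y) 0 0 (t_s y))) (phi (MCT 0 (t_m y) 0 0)))
    (phi (MCT 0 0 (t_n y) 0)).
  by rewrite -!addP; congr phi; case: y => r m n s; msimp.
have [a [b HP]] : exists a b, phi (E1 C) = MCT a 0 0 b.
  have [] := G0 (E1 C) erefl erefl; case: (phi (E1 C)) => a m1 n1 b /= -> ->.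
  by exists a, b.
have comm y0 : t_m y0 = 0 -> t_n y0 = 0 ->
    mcT_mul (MCT a 0 0 b) (phi y0) = mcT_mul (phi y0) (MCT a 0 0 b).
  by case: y0 => r0 m0 n0 s0 /= -> ->; rewrite -HP -!mulP; congr phi; rewrite /E1; msimp.
have ca : forall x, a * x = x * a.
  move=> r'; set y := g (MCT r' 0 0 0).
  have E : r' = t_r (phi (MCT (t_r y) 0 0 (t_s y))).
    have := dec y; rewrite gK /mcT_add => E; case: E => ->.
    by rewrite (proj1 (G1 _)) (proj1 (G2 _)) !addr0.
  have [hm hn] := G0 (MCT (t_r y) 0 0 (t_s y)) erefl erefl.
  have := comm _ (erefl : t_m (MCT (t_r y) 0 0 (t_s y)) = 0) erefl.
  move: hm hn E; case: (phi _) => r1 m1 n1 s1 /= -> -> ->.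
  rewrite /mcT_mul /= => H; case: H; rewrite !f0l !addr0 => -> //.
have cb : forall x, b * x = x * b.
  move=> r'; set y := g (MCT 0 0 0 r').
  have E : r' = t_s (phi (MCT (t_r y) 0 0 (t_s y))).
    have := dec y; rewrite gK /mcT_add => E; case: E => _ _ _ ->.
    by rewrite (proj2 (G1 _)) (proj2 (G2 _)) !addr0.
  have [hm hn] := G0 (MCT (t_r y) 0 0 (t_s y)) erefl erefl.
  have := comm _ (erefl : t_m (MCT (t_r y) 0 0 (t_s y)) = 0) erefl.
  move: hm hn E; case: (phi _) => r1 m1 n1 s1 /= -> -> ->.
  rewrite /mcT_mul /= => H; case: H => _ _ _; rewrite !g0l !add0r => -> //.
have idem : mcT_mul (MCT a 0 0 b) (MCT a 0 0 b) = MCT a 0 0 b.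
  by rewrite -HP -mulP; congr phi; rewrite /E1; msimp.
have ia : a * a = a by move: idem; rewrite /mcT_mul /= => H; case: H; rewrite f0l addr0.
have ib : b * b = b by move: idem; rewrite /mcT_mul /= => H; case: H; rewrite g0l add0r.
have inj := can_inj phiK.
case: (indR a ia ca) => Ea; case: (indS b ib cb) => Eb; subst a b.
- exfalso; have : E1 C = mcT_zero C by apply: inj; rewrite HP Z.
  by move=> H; case: H => /eqP; rewrite oner_eq0.
- by right; apply: case2.
- by left; apply: case1.
- exfalso; have : E1 C = mcT_one C by apply: inj; rewrite HP oneP.
  by move=> H; case: H => /esym/eqP; rewrite oner_eq0.
Qed.
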